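(* Let $\mathbf{S}_1, \mathbf{S}_2, \mathbf{S}_3 \subset \mathbb{R}^2$ be pairwise disjoint sets with $|\mathbf{S}_i| = 3$ for each $i$, such that the points of $\mathbf{S}_1\cup\mathbf{S}_2\cup\mathbf{S}_3\cup\{0\}$ are in general position (with $0 \notin \bigcup_i \mathbf{S}_i$) and $0 \in \operatorname{conv}(\mathbf{S}_i \cup \mathbf{S}_j)$ for all $i \neq j$. Then at least $3$ colourful triangles contain $0$. Moreover this bound is attained, i.e. $\mu^\Diamond(2) = 3$.
   Context: A colourful triangle is $\operatorname{conv}\{x_1,x_2,x_3\}$ with $x_i \in \mathbf{S}_i$ for each $i$ (closed); distinct choices of $(x_1,x_2,x_3)$ count as distinct. $\mu^\Diamond(d)$ denotes the minimum, over all configurations of pairwise disjoint sets $\mathbf{S}_1,\dots,\mathbf{S}_{d+1}\subset\mathbb{R}^d$ with $|\mathbf{S}_i|=d+1$, in general position together with $0$, satisfying $0 \in \operatorname{conv}(\mathbf{S}_i \cup \mathbf{S}_j)$ for all $i\ne j$, of the number of colourful simplices (one vertex from each $\mathbf{S}_i$) containing $0$. *)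

(* Defs.v *)
From HB Require Import structures.
From mathcomp Require Import all_boot all_order all_algebra.
From Stdlib Require Import ClassicalEpsilon.
Set Implicit Arguments. Unset Strict Implicit. Unset Printing Implicit Defensive.
Import Order.TTheory GRing.Theory Num.Theory.
Local Open Scope ring_scope.

Notation point R := 'rV[R]_2.

Definition asbool (P : Prop) : bool :=
  if excluded_middle_informative P then true else false.

Definition in_conv (R : realFieldType) (I : finType) (X : I -> point R)
    (x : point R) : Prop :=
  exists w : I -> R,
    (forall i, 0 <= w i) /\ \sum_i w i = 1 /\ \sum_i w i *: X i = x.

Definition collinear (R : realFieldType) (p q r : point R) : Prop :=
  (q 0 0 - p 0 0) * (r 0 1 - p 0 1) - (q 0 1 - p 0 1) * (r 0 0 - p 0 0) = 0.

(* A configuration: S i k is the k-th point of colour class S_(i+1),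
   i, k : 'I_3 (so d = 2, d+1 = 3 classes of d+1 = 3 points). *)
Definition config (R : realFieldType) := 'I_3 -> 'I_3 -> point R.

(* The points of S_1 ∪ S_2 ∪ S_3 ∪ {0}; None stands for the origin. *)
Definition all_pts (R : realFieldType) (S : config R)
    (o : option ('I_3 * 'I_3)) : point R :=
  if o is Some ik then S ik.1 ik.2 else 0.

(* The 9 points are pairwise distinct (pairwise disjoint sets of size 3),
   0 is not among them, and the 10 points S_1 ∪ S_2 ∪ S_3 ∪ {0} are in
   general position in the plane (no three distinct ones collinear). *)
Definition general_position (R : realFieldType) (S : config R) : Prop :=
  injective (all_pts S) /\
  forall a b c, a != b -> a != c -> b != c ->
    ~ collinear (all_pts S a) (all_pts S b) (all_pts S c).

Definition pair_condition (R : realFieldType) (S : config R) : Prop :=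
  forall i j : 'I_3, i != j ->
    in_conv (fun bk : bool * 'I_3 => S (if bk.1 then i else j) bk.2) 0.

Definition colourful_contains (R : realFieldType) (S : config R)
    (t : {ffun 'I_3 -> 'I_3}) : Prop :=
  in_conv (fun c : 'I_3 => S c (t c)) 0.

(* number of colourful triangles containing 0 (distinct choices counted
   separately) *)
Definition num_colourful (R : realFieldType) (S : config R) : nat :=
  #|[set t : {ffun 'I_3 -> 'I_3} | asbool (colourful_contains S t)]|.

(* Main.v *)
Require Import Defs.
From Stdlib Require Import Classical ClassicalEpsilon.
From HB Require Import structures.
From mathcomp Require Import all_boot all_order all_algebra.
Import Order.TTheory GRing.Theory Num.Theory.
Local Open Scope ring_scope.

Section Geo.
Variable R : realFieldType.
Implicit Types p q u v w x : point R.

Definition det2 (p q : point R) : R := p 0 0 * q 0 1 - p 0 1 * q 0 0.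

Lemma det2_anti p q : det2 q p = - det2 p q.
Proof. by rewrite /det2 opprB [q 0 0 * _]mulrC [q 0 1 * _]mulrC. Qed.

Lemma det2_self p : det2 p p = 0.
Proof. by rewrite /det2 mulrC subrr. Qed.

Lemma det2Dr p x y : det2 p (x + y) = det2 p x + det2 p y.
Proof. by rewrite /det2 !mxE !mulrDr opprD addrACA. Qed.

Lemma det2Zr p a x : det2 p (a *: x) = a * det2 p x.
Proof. by rewrite /det2 !mxE mulrBr mulrCA [p 0 1 * _]mulrCA. Qed.

Lemma det20r p : det2 p 0 = 0.
Proof. by rewrite /det2 !mxE !mulr0 subrr. Qed.

Lemma det2_sumr p (I : finType) (w : I -> R) (X : I -> point R) :
  det2 p (\sum_i w i *: X i) = \sum_i w i * det2 p (X i).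
Proof.
rewrite (big_morph (det2 p) (det2Dr p) (det20r p)).
by apply: eq_bigr => i _; rewrite det2Zr.
Qed.

Lemma cyc3 (x y z : R) : (x - y) + (y - z) + (z - x) = 0.
Proof. by rewrite [x - y + _]addrA subrK -[z - x]opprB subrr. Qed.

Lemma id6a (a0 a1 b0 b1 c0 c1 : R) :
  (b0*c1 - b1*c0)*a0 + (c0*a1 - c1*a0)*b0 + (a0*b1 - a1*b0)*c0 = 0.
Proof.
rewrite !mulrBl.
have e1 : c1*a0*b0 = b0*c1*a0 by rewrite [LHS]mulrC mulrA.
have e2 : a0*b1*c0 = b1*c0*a0 by rewrite [RHS]mulrC mulrA.
have e3 : a1*b0*c0 = c0*a1*b0 by rewrite [LHS]mulrC mulrA.
rewrite e1 e2 e3 addrAC; exact: cyc3.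
Qed.

Lemma id6b (a0 a1 b0 b1 c0 c1 : R) :
  (b0*c1 - b1*c0)*a1 + (c0*a1 - c1*a0)*b1 + (a0*b1 - a1*b0)*c1 = 0.
Proof.
rewrite !mulrBl.
have e1 : a1*b0*c1 = b0*c1*a1 by rewrite [RHS]mulrC mulrA.
have e2 : c0*a1*b1 = b1*c0*a1 by rewrite [LHS]mulrC mulrA.
have e3 : a0*b1*c1 = c1*a0*b1 by rewrite [LHS]mulrC mulrA.
rewrite e1 e2 e3; exact: cyc3.
Qed.

Lemma det2_vec u v w : det2 v w *: u + det2 w u *: v + det2 u v *: w = 0.
Proof.
apply/rowP => j; rewrite !mxE /det2.
case: j => [[|[|k]] hk] //.
  have -> : Ordinal hk = 0 by apply: val_inj.
  exact: id6a.
have -> : Ordinal hk = 1 by apply: val_inj.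
exact: id6b.
Qed.


Lemma I1 u v w x :
  det2 v w * det2 x u + det2 w u * det2 x v + det2 u v * det2 x w = 0.
Proof.
have := congr1 (det2 x) (det2_vec u v w).
by rewrite det20r !det2Dr !det2Zr.
Qed.

Lemma ltNz (x : R) : x != 0 -> (x < 0) = ~~ (0 < x).
Proof. by move=> nx; rewrite ltNge le_eqVlt eq_sym (negbTE nx). Qed.

Lemma gtN (x : R) : x != 0 -> (0 < - x) = ~~ (0 < x).
Proof. by move=> nx; rewrite oppr_gt0 ltNz. Qed.

Lemma gtM (a b : R) : a != 0 -> b != 0 -> (0 < a * b) = ((0 < a) == (0 < b)).
Proof.
move=> na nb; case: (boolP (0 < a)) => ha; first by rewrite pmulr_rgt0.
have ha' : a < 0 by rewrite ltNz.
by rewrite nmulr_rgt0 // ltNz //; case: (0 < b).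
Qed.

Lemma sum3 {a b c : R} : a + b + c = 0 -> a != 0 -> b != 0 -> c != 0 ->
  ~~ (((0 < a) == (0 < b)) && ((0 < b) == (0 < c))).
Proof.
move=> s na nb nc.
case: (boolP (0 < a)) => ha; case: (boolP (0 < b)) => hb;
  case: (boolP (0 < c)) => hc //=.
  have : 0 < a + b + c by rewrite !addr_gt0.
  by rewrite s ltxx.
have : 0 < - (a + b + c) by rewrite !opprD !addr_gt0 // gtN.
by rewrite s oppr0 ltxx.
Qed.

Definition tri p q r :=
  ((0 < det2 p q) == (0 < det2 q r)) && ((0 < det2 q r) == (0 < det2 r p)).

Lemma tri_swap u v w x :
  det2 u v != 0 -> det2 v w != 0 -> det2 w u != 0 ->
  det2 x u != 0 -> det2 x v != 0 -> det2 x w != 0 ->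
  tri u v w -> [|| tri x v w, tri u x w | tri u v x].
Proof.
move=> nuv nvw nwu nxu nxv nxw.
have H := sum3 (I1 u v w x) (mulf_neq0 nvw nxu) (mulf_neq0 nwu nxv)
  (mulf_neq0 nuv nxw).
rewrite !gtM // in H.
rewrite /tri (det2_anti x w) (det2_anti x v) (det2_anti x u) !gtN //.
move: H.
by case: (0 < det2 u v); case: (0 < det2 v w); case: (0 < det2 w u);
  case: (0 < det2 x u); case: (0 < det2 x v); case: (0 < det2 x w).
Qed.

Lemma tr3 {p a b c : point R} : 0 < det2 p a -> 0 < det2 p b -> 0 < det2 p c ->
  0 < det2 a b -> 0 < det2 b c -> 0 < det2 a c.
Proof.
move=> pa pb pc ab bc.
have hY : 0 < - (det2 c a * det2 p b).
  have := I1 a b c p; rewrite addrAC => /eqP; rewrite addr_eq0 => /eqP <-.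
  by rewrite addr_gt0 // mulr_gt0.
rewrite oppr_gt0 pmulr_llt0 // in hY.
by rewrite (det2_anti c a) oppr_gt0.
Qed.

Definition ecr W p q :=
  ((0 < det2 W p) != (0 < det2 W q)) && ((0 < det2 p q) == (0 < det2 W q)).

Lemma LL W a b c :
  det2 W a != 0 -> det2 W b != 0 -> det2 W c != 0 ->
  det2 a b != 0 -> det2 b c != 0 -> det2 c a != 0 ->
  tri a b c = ecr W a b (+) ecr W b c (+) ecr W c a.
Proof.
move=> na nb nc nab nbc nca.
have H := sum3 (I1 a b c W) (mulf_neq0 nbc na) (mulf_neq0 nca nb)
  (mulf_neq0 nab nc).
rewrite !gtM // in H.
rewrite /tri /ecr; move: H.
by case: (0 < det2 W a); case: (0 < det2 W b); case: (0 < det2 W c);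
  case: (0 < det2 a b); case: (0 < det2 b c); case: (0 < det2 c a).
Qed.

Lemma octa W (A B C : bool -> point R) :
  (forall b, det2 W (A b) != 0) -> (forall b, det2 W (B b) != 0) ->
  (forall b, det2 W (C b) != 0) ->
  (forall b b', det2 (A b) (B b') != 0) -> (forall b b', det2 (B b) (C b') != 0) ->
  (forall b b', det2 (C b) (A b') != 0) ->
  ~~ odd (tri (A false) (B false) (C false) + tri (A false) (B false) (C true) +
          tri (A false) (B true) (C false) + tri (A false) (B true) (C true) +
          tri (A true) (B false) (C false) + tri (A true) (B false) (C true) +
          tri (A true) (B true) (C false) + tri (A true) (B true) (C true)).
Proof.
move=> hA hB hC hAB hBC hCA.
have L (b0 b1 b2 : bool) := @LL W _ _ _ (hA b0) (hB b1) (hC b2) (hAB b0 b1) (hBC b1 b2) (hCA b2 b0).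
rewrite !L.
by case: (ecr W (A false) (B false)); case: (ecr W (A false) (B true));
   case: (ecr W (A true) (B false)); case: (ecr W (A true) (B true));
   case: (ecr W (B false) (C false)); case: (ecr W (B false) (C true));
   case: (ecr W (B true) (C false)); case: (ecr W (B true) (C true));
   case: (ecr W (C false) (A false)); case: (ecr W (C false) (A true));
   case: (ecr W (C true) (A false)); case: (ecr W (C true) (A true)).
Qed.

Lemma det20l q : det2 0 q = 0.
Proof. by rewrite det2_anti det20r oppr0. Qed.

Lemma sum3E (V : nmodType) (F : 'I_3 -> V) : \sum_i F i = F 0 + F 1 + F 2.
Proof.
rewrite !big_ord_recl big_ord0 addr0 addrA.
by congr (_ + _ + _); congr F; apply: val_inj.
Qed.

Lemma pos_eq {x y a b : R} : 0 < x -> 0 < y -> x * a = y * b ->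
  (0 < a) = (0 < b).
Proof. by move=> hx hy E; rewrite -(pmulr_rgt0 a hx) E pmulr_rgt0. Qed.

Lemma conv_tri3 (X : 'I_3 -> point R) :
  det2 (X 0) (X 1) != 0 -> det2 (X 1) (X 2) != 0 -> det2 (X 2) (X 0) != 0 ->
  in_conv X 0 -> tri (X 0) (X 1) (X 2).
Proof.
move=> nab nbc nca [w [w0 [s1 s0]]].
rewrite sum3E in s1; rewrite (@sum3E 'rV[R]_2) in s0.
have Ha := congr1 (det2 (X 0)) s0.
have Hb := congr1 (det2 (X 1)) s0.
have Hc := congr1 (det2 (X 2)) s0.
rewrite det20r !det2Dr !det2Zr det2_self mulr0 add0r in Ha.
rewrite det20r !det2Dr !det2Zr det2_self mulr0 addr0 in Hb.
rewrite det20r !det2Dr !det2Zr det2_self mulr0 addr0 in Hc.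
rewrite (det2_anti (X 2) (X 0)) mulrN in Ha.
rewrite (det2_anti (X 0) (X 1)) mulrN addrC in Hb.
rewrite (det2_anti (X 1) (X 2)) mulrN in Hc.
move/eqP: Ha; rewrite subr_eq0 => /eqP Ha.
move/eqP: Hb; rewrite subr_eq0 => /eqP Hb.
move/eqP: Hc; rewrite subr_eq0 => /eqP Hc.
have s1' := s1.
have nz0 : w 0 != 0.
  apply/negP => /eqP z; rewrite z mul0r in Hb.
  move/eqP: Hb; rewrite mulf_eq0 (negbTE nbc) orbF => /eqP z2.
  rewrite z2 mul0r in Ha; move/eqP: Ha; rewrite mulf_eq0 (negbTE nab) orbF.
  move=> /eqP z1; move: s1; rewrite z z1 z2 !addr0 => /eqP.
  by rewrite eq_sym oner_eq0.
have nz1 : w 1 != 0.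
  apply/negP => /eqP z; rewrite z mul0r in Hc.
  move/eqP: Hc; rewrite mulf_eq0 (negbTE nca) orbF => /eqP z0.
  rewrite z0 mul0r in Hb; move/eqP: Hb; rewrite mulf_eq0 (negbTE nbc) orbF.
  move=> /eqP z2; move: s1; rewrite z z0 z2 !addr0 => /eqP.
  by rewrite eq_sym oner_eq0.
have nz2 : w 2 != 0.
  apply/negP => /eqP z; rewrite z mul0r in Ha.
  move/eqP: Ha; rewrite mulf_eq0 (negbTE nab) orbF => /eqP z1.
  rewrite z1 mul0r in Hc; move/eqP: Hc; rewrite mulf_eq0 (negbTE nca) orbF.
  move=> /eqP z0; move: s1; rewrite z z0 z1 !addr0 => /eqP.
  by rewrite eq_sym oner_eq0.
have p0 : 0 < w 0 by rewrite lt_def nz0 w0.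
have p1 : 0 < w 1 by rewrite lt_def nz1 w0.
have p2 : 0 < w 2 by rewrite lt_def nz2 w0.
rewrite /tri (pos_eq p2 p0 Hb) (pos_eq p1 p2 Ha).
by rewrite !eqxx.
Qed.

Lemma tri3_conv (X : 'I_3 -> point R) :
  det2 (X 0) (X 1) != 0 -> det2 (X 1) (X 2) != 0 -> det2 (X 2) (X 0) != 0 ->
  tri (X 0) (X 1) (X 2) -> in_conv X 0.
Proof.
move=> nab nbc nca ht.
set dab := det2 (X 0) (X 1); set dbc := det2 (X 1) (X 2); set dca := det2 (X 2) (X 0).
set D := dbc + dca + dab.
have [nD wp] : D != 0 /\ (0 <= dbc / D) && (0 <= dca / D) && (0 <= dab / D).
  move: ht; rewrite /tri -/dab -/dbc -/dca.
  case: (boolP (0 < dab)) => hab; case: (boolP (0 < dbc)) => hbc;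
    case: (boolP (0 < dca)) => hca //= _.
    have hD : 0 < D by rewrite /D addr_gt0 // addr_gt0.
    by rewrite gt_eqF // !divr_ge0 // ltW.
  have hab' : dab < 0 by rewrite ltNz.
  have hbc' : dbc < 0 by rewrite ltNz.
  have hca' : dca < 0 by rewrite ltNz.
  have hD : D < 0.
    rewrite /D -oppr_gt0 opprD opprD; apply: addr_gt0; [apply: addr_gt0|]; by rewrite oppr_gt0.
  by rewrite lt_eqF // !mulr_le0 // ?invr_le0 ltW.
case/andP: wp => /andP [wa wb] wc.
exists (fun i : 'I_3 => [:: dbc; dca; dab]`_i / D).
split; last split.
- by case=> [[|[|[|]]] ?] //=.
- by rewrite sum3E /= -!mulrDl divff.
rewrite (@sum3E 'rV[R]_2) /= ![_ / D]mulrC -!scalerA -!scalerDr.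
by rewrite /dab /dbc /dca det2_vec scaler0.
Qed.

Lemma in_conv_comp (I J : finType) (f : J -> I) (X : I -> point R) :
  in_conv (fun j => X (f j)) 0 -> in_conv X 0.
Proof.
case=> w [w0 [s1 s0]].
exists (fun i => \sum_(j | f j == i) w j); split; last split.
- by move=> i; apply: sumr_ge0.
- by rewrite -s1 (partition_big f predT).
rewrite -[X in _ = X]s0 [RHS](partition_big f predT) //=.
apply: eq_bigr => i _; rewrite scaler_suml.
by apply: eq_big => // j /eqP <-.
Qed.

Lemma conv_contra (I : finType) (Y : I -> point R) p q :
  in_conv Y 0 -> (forall i, 0 < det2 q (Y i) - det2 p (Y i)) -> False.
Proof.
case=> w [w0 [s1 s0]] hpos.
have hs : \sum_i w i * (det2 q (Y i) - det2 p (Y i)) = 0.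
  rewrite (eq_bigr (fun i => w i * det2 q (Y i) - w i * det2 p (Y i))).
    by rewrite sumrB -!det2_sumr s0 !det20r subrr.
  by move=> i _; rewrite mulrBr.
have hz := psumr_eq0P (fun i _ => mulr_ge0 (w0 i) (ltW (hpos i))) hs.
have wz : forall i, w i = 0.
  move=> i; have /eqP := hz i isT; rewrite mulf_eq0 => /orP [/eqP //|].
  by rewrite gt_eqF.
move: s1; rewrite big1 // => /eqP; by rewrite eq_sym oner_eq0.
Qed.

Lemma in_conv_tri (I : finType) (X : I -> point R) :
  (forall i j, i != j -> det2 (X i) (X j) != 0) -> (exists i j : I, i != j) ->
  in_conv X 0 -> exists i j k,
    [/\ 0 < det2 (X i) (X j), 0 < det2 (X j) (X k) & 0 < det2 (X k) (X i)].
Proof.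
move=> nz [i1 [i2 ne12]] hc.
have F2 : forall i, exists j, 0 < det2 (X i) (X j).
  move=> i; case: (pickP (fun j => 0 < det2 (X i) (X j))) => [j hj|H].
    by exists j.
  exfalso; case: hc => w [w0 [s1 s0]].
  have hs : \sum_j (- (w j * det2 (X i) (X j))) = 0.
    by rewrite sumrN -det2_sumr s0 det20r oppr0.
  have hnn : forall j, true -> 0 <= - (w j * det2 (X i) (X j)).
    move=> j _; rewrite oppr_ge0 mulr_ge0_le0 //.
    by rewrite leNgt H.
  have hz := psumr_eq0P hnn hs.
  have wz : forall j, j != i -> w j = 0.
    move=> j nji; have /eqP := hz j isT; rewrite oppr_eq0 mulf_eq0.
    case/orP => [/eqP //|]; by rewrite (negbTE (nz i j _)) // eq_sym.
  rewrite (bigD1 i) //= big1 ?addr0 in s1; last by move=> j /wz.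
  rewrite (bigD1 i) //= big1 ?addr0 in s0; last first.
    by move=> j /wz ->; rewrite scale0r.
  rewrite s1 scale1r in s0.
  have [j0 nj0] : exists j0, i != j0.
    case: (eqVneq i1 i) => [e|n]; last by exists i1; rewrite eq_sym.
    by exists i2; rewrite -e.
  by move: (nz i j0 nj0); rewrite s0 det20l eqxx.
case: (F2 i1) => j0 hj0.
pose L := fun j => 0 < det2 (X i1) (X j).
pose F := fun j => #|[pred k | L k && (0 < det2 (X k) (X j))]|.
case: (@arg_maxnP I j0 L F hj0) => j hj jmax.
case: (F2 j) => r hr.
have nr : ~~ L r.
  apply/negP => hLr; have := jmax r hLr; rewrite /= leqNgt => /negP; apply.
  apply: proper_card; apply/properP; split.
    apply/subsetP => k; rewrite !inE => /andP [hk hkj].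
    by rewrite hk (tr3 hk hj hLr hkj hr).
  by exists j; rewrite !inE ?hj ?hr // det2_self ltxx andbF.
have nri : i1 != r.
  apply/negP => /eqP e; move: hr; rewrite -e (det2_anti (X i1) (X j)) oppr_gt0.
  by move=> h; have := lt_trans h hj; rewrite ltxx.
have hneg : det2 (X i1) (X r) < 0 by rewrite ltNz ?nz.
exists i1, j, r; split => //.
by rewrite (det2_anti (X i1) (X r)) oppr_gt0.
Qed.

Definition lab := ('I_3 * 'I_3)%type.
Definition P (S : config R) (l : lab) := S l.1 l.2.
Definition CT S (l1 l2 l3 : lab) := tri (P S l1) (P S l2) (P S l3).

Lemma gp_det {S : config R} (gp : general_position S) {l l' : lab} :
  l != l' -> det2 (P S l) (P S l') != 0.
Proof.
move: gp => [_ H] n.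
have := H None (Some l) (Some l') isT isT n.
rewrite /collinear /= !mxE !subr0 => h.
by apply/eqP => e; apply: h.
Qed.

Lemma tri_rot p q r : tri p q r = tri q r p.
Proof.
rewrite /tri.
by case: (0 < det2 p q); case: (0 < det2 q r); case: (0 < det2 r p).
Qed.

Lemma tri_sw p q r : det2 p q != 0 -> det2 q r != 0 -> det2 r p != 0 ->
  tri p q r = tri q p r.
Proof.
move=> n1 n2 n3.
rewrite /tri (det2_anti p q) (det2_anti q r) (det2_anti r p) !gtN //.
by case: (0 < det2 p q); case: (0 < det2 q r); case: (0 < det2 r p).
Qed.

Lemma ord3 (c : 'I_3) : [\/ c = 0, c = 1 | c = 2].
Proof.
case: c => [[|[|[|//]]] h].
- by apply: Or31; apply: val_inj.
- by apply: Or32; apply: val_inj.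
- by apply: Or33; apply: val_inj.
Qed.

Definition other2 (c d : 'I_3) : 'I_3 :=
  if (0 != c) && (0 != d) then 0 else if (1 != c) && (1 != d) then 1 else 2.

Lemma other2P (c d : 'I_3) : (other2 c d != c) && (other2 c d != d).
Proof. by case: (ord3 c) => ->; case: (ord3 d) => ->. Qed.

Lemma lab_neq (l l' : lab) : l.1 != l'.1 -> l != l'.
Proof. by move=> h; apply/negP => /eqP e; move: h; rewrite e eqxx. Qed.

Lemma lab_neq2 (l l' : lab) : l.2 != l'.2 -> l != l'.
Proof. by move=> h; apply/negP => /eqP e; move: h; rewrite e eqxx. Qed.

Lemma CT_rot S (l1 l2 l3 : lab) : CT S l1 l2 l3 = CT S l2 l3 l1.
Proof. exact: tri_rot. Qed.

Lemma CT_sw {S : config R} : general_position S -> forall l1 l2 l3 : lab,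
  l1 != l2 -> l2 != l3 -> l3 != l1 -> CT S l1 l2 l3 = CT S l2 l1 l3.
Proof. by move=> gp l1 l2 l3 n1 n2 n3; apply: tri_sw; apply: gp_det. Qed.

Lemma CT_swap {S : config R} (gp : general_position S) {l1 l2 l3 x : lab} :
  l1 != l2 -> l2 != l3 -> l3 != l1 -> x != l1 -> x != l2 -> x != l3 ->
  CT S l1 l2 l3 -> [|| CT S x l2 l3, CT S l1 x l3 | CT S l1 l2 x].
Proof.
move=> n12 n23 n31 n1 n2 n3.
by apply: tri_swap; apply: gp_det.
Qed.

Lemma tri_contra (I : finType) (Y : I -> point R) p q :
  in_conv Y 0 -> det2 p q != 0 ->
  (forall i, det2 q (Y i) != 0) -> (forall i, det2 (Y i) p != 0) ->
  (forall i, tri p q (Y i)) -> False.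
Proof.
move=> hc npq n1 n2 ht.
case: (boolP (0 < det2 p q)) => hs.
  apply: (@conv_contra _ _ p q hc) => i.
  have := ht i; rewrite /tri hs => /andP [/eqP h1 /eqP h2].
  rewrite -h1 in h2.
  by rewrite (det2_anti (Y i) p) opprK; apply: addr_gt0; [rewrite -h1 | rewrite -h2].
apply: (@conv_contra _ _ q p hc) => i.
have := ht i; rewrite /tri (negbTE hs) => /andP [/eqP h1 /eqP h2].
rewrite -h1 in h2.
have a1 : det2 q (Y i) < 0 by rewrite ltNz // -h1.
have a2 : det2 (Y i) p < 0 by rewrite ltNz // -h2.
rewrite (det2_anti p (Y i)) oppr_lt0 in a2.
by rewrite addr_gt0 // oppr_gt0.
Qed.

Section Exist.
Variable S : config R.
Hypothesis gp : general_position S.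
Hypothesis pc : pair_condition S.
Hypothesis NoC : forall l1 l2 l3 : lab,
  l1.1 != l2.1 -> l2.1 != l3.1 -> l1.1 != l3.1 -> ~ CT S l1 l2 l3.

Lemma main21 {p q r : lab} : p != q -> p.1 = q.1 -> r.1 != p.1 -> CT S p q r -> False.
Proof.
move=> npq epq nrp hct.
set i := p.1; set j := r.1; set k := other2 i j.
have /andP [ki kj] := other2P i j.
have nrq : r != q by apply: lab_neq; rewrite -epq.
have nrp' : r != p by apply: lab_neq.
have nqr : q != r by rewrite eq_sym.
have hx1 : forall x : lab, x.1 = k -> CT S p q x.
  move=> x hx.
  have nxp : x != p by apply: lab_neq; rewrite hx.
  have nxq : x != q by apply: lab_neq; rewrite hx -epq.
  have nxr : x != r by apply: lab_neq; rewrite hx.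
  case/or3P: (CT_swap gp npq nqr nrp' nxp nxq nxr hct).
  - move=> h; exfalso; apply: (NoC x q r) => //.
    + by rewrite hx -epq.
    + by rewrite -epq eq_sym.
    + by rewrite hx.
  - move=> h; exfalso; apply: (NoC p x r) => //.
    + by rewrite hx eq_sym.
    + by rewrite hx.
    + by rewrite eq_sym.
  - by [].
have hx2 : forall x : lab, x.1 = j -> CT S p q x.
  move=> x hx.
  pose z : lab := (k, 0).
  have hz := hx1 z erefl.
  have nzp : z != p by apply: lab_neq.
  have nzq : z != q by apply: lab_neq; rewrite /= -epq.
  have nqz : q != z by rewrite eq_sym.
  have nxp : x != p by apply: lab_neq; rewrite hx.
  have nxq : x != q by apply: lab_neq; rewrite hx -epq.
  have nxz : x != z by apply: lab_neq; rewrite hx eq_sym.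
  case/or3P: (CT_swap gp npq nqz nzp nxp nxq nxz hz).
  - move=> h; exfalso; apply: (NoC x q z) => //.
    + by rewrite hx -epq.
    + by rewrite -epq /= eq_sym.
    + by rewrite hx /= eq_sym.
  - move=> h; exfalso; apply: (NoC p x z) => //.
    + by rewrite hx eq_sym.
    + by rewrite hx /= eq_sym.
    + by rewrite /= eq_sym.
  - by [].
have njk : j != k by rewrite eq_sym.
have := pc _ _ njk.
set g := fun bk : bool * 'I_3 => ((if bk.1 then j else k), bk.2) : lab.
move=> hc.
apply: (@tri_contra _ (fun bk => P S (g bk)) (P S p) (P S q) hc).
- exact: (gp_det gp npq).
- move=> bk; apply: (gp_det gp); apply: lab_neq; rewrite /g /=.
  by case: bk.1; rewrite -epq //; rewrite eq_sym.
- move=> bk; apply: (gp_det gp); apply: lab_neq; rewrite /g /=.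
  by case: bk.1.
move=> bk; rewrite /g; case: bk => [[] kk] /=.
  exact: hx2.
exact: hx1.
Qed.

Lemma CT_false (l1 l2 l3 : lab) : l1 != l2 -> l2 != l3 -> l3 != l1 -> CT S l1 l2 l3 -> False.
Proof.
have H21 : forall a b c : lab, a != b -> b != c -> c != a -> CT S a b c ->
    ~~ [&& a.1 != b.1, b.1 != c.1 & a.1 != c.1] ->
    ~~ ((a.1 == b.1) && (b.1 == c.1)) -> False.
  move=> a b c nab nbc nca h nd ne.
  case: (eqVneq a.1 b.1) => eab.
    have nca1 : c.1 != a.1 by apply/negP => /eqP e; move: ne; rewrite e eab !eqxx.
    exact: (main21 nab eab nca1 h).
  case: (eqVneq b.1 c.1) => ebc.
    apply: (main21 nbc ebc eab).
    by rewrite -CT_rot.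
  have eca : c.1 = a.1.
    by apply/eqP; move: nd; rewrite eab ebc /= negbK eq_sym.
  apply: (main21 nca eca ebc).
  by rewrite CT_rot.
move=> n12 n23 n31 h.
case: (boolP [&& l1.1 != l2.1, l2.1 != l3.1 & l1.1 != l3.1]).
  by case/and3P => a b c; exact: (NoC _ _ _ a b c h).
move=> nd.
case: (boolP ((l1.1 == l2.1) && (l2.1 == l3.1))); last exact: H21 h nd.
case/andP => /eqP e12 /eqP e23.
pose x : lab := (other2 l1.1 l1.1, 0).
have /andP [hx _] := other2P l1.1 l1.1.
have nx1 : x != l1 by apply: lab_neq.
have nx2 : x != l2 by apply: lab_neq; rewrite /= -e12.
have nx3 : x != l3 by apply: lab_neq; rewrite /= -e23 -e12.
have hx' : l1.1 != other2 l1.1 l1.1 by rewrite eq_sym.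
have n21 : l2 != l1 by rewrite eq_sym.
have n32 : l3 != l2 by rewrite eq_sym.
have n13 : l1 != l3 by rewrite eq_sym.
have mx1 : l1 != x by rewrite eq_sym.
have mx2 : l2 != x by rewrite eq_sym.
have mx3 : l3 != x by rewrite eq_sym.
case/or3P: (CT_swap gp n12 n23 n31 nx1 nx2 nx3 h) => h';
  apply: (H21 _ _ _ _ _ _ h') => //;
  rewrite /= -?e23 -?e12 ?eqxx ?(negbTE hx) ?(negbTE hx') ?andbF ?andFb ?hx ?hx' //.
Qed.

End Exist.

Definition CTt (S : config R) (t : {ffun 'I_3 -> 'I_3}) :=
  CT S (0, t 0) (1, t 1) (2, t 2).

Lemma cc_iff {S : config R} (gp : general_position S) t :
  colourful_contains S t <-> CTt S t.
Proof.
have n01 : det2 (S 0 (t 0)) (S 1 (t 1)) != 0.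
  by apply: (@gp_det S gp (0, t 0) (1, t 1)).
have n12 : det2 (S 1 (t 1)) (S 2 (t 2)) != 0.
  by apply: (@gp_det S gp (1, t 1) (2, t 2)).
have n20 : det2 (S 2 (t 2)) (S 0 (t 0)) != 0.
  by apply: (@gp_det S gp (2, t 2) (0, t 0)).
split.
  exact: (@conv_tri3 (fun c => S c (t c)) n01 n12 n20).
exact: (@tri3_conv (fun c => S c (t c)) n01 n12 n20).
Qed.

Lemma canon {S : config R} (gp : general_position S) {l1 l2 l3 : lab} :
  l1.1 != l2.1 -> l2.1 != l3.1 -> l1.1 != l3.1 -> CT S l1 l2 l3 ->
  exists t, colourful_contains S t.
Proof.
move=> n12 n23 n13 h.
exists [ffun c => if c == l1.1 then l1.2 else if c == l2.1 then l2.2 else l3.2].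
apply/(cc_iff gp); rewrite /CTt.
rewrite !ffunE.
move: n12 n23 n13 h; case: l1 => c1 k1; case: l2 => c2 k2; case: l3 => c3 k3 /=.
case: (ord3 c1) => ->; case: (ord3 c2) => ->; case: (ord3 c3) => -> //= _ _ _ h.
all: first [ done | by rewrite CT_rot | by rewrite -CT_rot | by rewrite (CT_sw gp)
           | by rewrite (CT_sw gp) // CT_rot | by rewrite (CT_sw gp) // -CT_rot ].
Qed.

Lemma exists_cc {S : config R} : general_position S -> pair_condition S ->
  exists t, colourful_contains S t.
Proof.
move=> gp pc; apply: NNPP => H.
have NoC : forall l1 l2 l3 : lab, l1.1 != l2.1 -> l2.1 != l3.1 -> l1.1 != l3.1 ->
    ~ CT S l1 l2 l3.
  by move=> l1 l2 l3 a b c h; apply: H; exact: (canon gp a b c h).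
have := pc 0 1 isT.
pose g := fun bk : bool * 'I_3 => ((if bk.1 then 0 else 1), bk.2) : lab.
move=> hc.
have ginj : forall a b, a != b -> g a != g b.
  move=> [a1 a2] [b1 b2]; rewrite /g /= !xpair_eqE.
  by case: a1; case: b1.
have [i [j [k [h1 h2 h3]]]] := @in_conv_tri _ (fun bk => P S (g bk))
  (fun i j n => gp_det gp (ginj i j n)) (ex_intro _ (true, 0) (ex_intro _ (false, 0) isT)) hc.
have d : forall a b : lab, 0 < det2 (P S a) (P S b) -> a != b.
  by move=> a b hab; apply/negP => /eqP e; move: hab; rewrite e det2_self ltxx.
apply: (@CT_false S gp pc NoC (g i) (g j) (g k)).
- exact: d h1.
- exact: d h2.
- exact: d h3.
by rewrite /CT /tri h1 h2 h3.
Qed.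

Lemma asboolE (Pr : Prop) : asbool Pr <-> Pr.
Proof. by rewrite /asbool; case: excluded_middle_informative => h; split. Qed.

Lemma lower (S : config R) : general_position S -> pair_condition S -> (3 <= num_colourful S)%N.
Proof.
move=> gp pc.
set A := [set t | asbool (colourful_contains S t)].
have inA : forall t, (t \in A) = CTt S t.
  move=> t; rewrite inE; apply/idP/idP => h.
    by apply/(cc_iff gp)/asboolE.
  by apply/asboolE/(cc_iff gp).
case: (exists_cc gp pc) => T hT.
have TA : T \in A by rewrite inA; apply/(cc_iff gp).
rewrite /num_colourful -/A leqNgt; apply/negP => hlt.
have cB : (#|A :\ T| <= 1)%N by move: hlt; rewrite (cardsD1 T A) TA add1n !ltnS.
pose uu := odflt T [pick t in A :\ T].
have key : forall t, t \in A -> t != T -> t = uu.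
  move=> t tA tT; have tB : t \in A :\ T by rewrite in_setD1 tT tA.
  rewrite /uu; case: pickP => [u uB|]; last by move=> /(_ t); rewrite tB.
  by move/card_le1_eqP: cB => cB'; apply: cB'.
pose y c := other2 (T c) (uu c).
have ny : forall c, y c != T c by move=> c; case/andP: (other2P (T c) (uu c)).
have nyu : forall c, y c != uu c by move=> c; case/andP: (other2P (T c) (uu c)).
pose W := S 0 (other2 (T 0) (y 0)).
pose Am b := S 0 (if b then y 0 else T 0).
pose Bm b := S 1 (if b then y 1 else T 1).
pose Cm b := S 2 (if b then y 2 else T 2).
have o1 : other2 (T 0) (y 0) != T 0 by case/andP: (other2P (T 0) (y 0)).
have o2 : other2 (T 0) (y 0) != y 0 by case/andP: (other2P (T 0) (y 0)).
have hA : forall b, det2 W (Am b) != 0.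
  move=> b; apply: (@gp_det S gp (0, other2 (T 0) (y 0)) (0, if b then y 0 else T 0)).
  by apply: lab_neq2; case: b.
have hB : forall b, det2 W (Bm b) != 0.
  by move=> b; apply: (@gp_det S gp (0, other2 (T 0) (y 0)) (1, if b then y 1 else T 1)).
have hC : forall b, det2 W (Cm b) != 0.
  by move=> b; apply: (@gp_det S gp (0, other2 (T 0) (y 0)) (2, if b then y 2 else T 2)).
have hAB : forall b b', det2 (Am b) (Bm b') != 0.
  by move=> b b'; apply: (@gp_det S gp (0, _) (1, _)).
have hBC : forall b b', det2 (Bm b) (Cm b') != 0.
  by move=> b b'; apply: (@gp_det S gp (1, _) (2, _)).
have hCA : forall b b', det2 (Cm b) (Am b') != 0.
  by move=> b b'; apply: (@gp_det S gp (2, _) (0, _)).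
have term0 : forall b0 b1 b2, b0 || b1 || b2 -> tri (Am b0) (Bm b1) (Cm b2) = false.
  move=> b0 b1 b2 hb; apply/negP => ht.
  pose t := [ffun c : 'I_3 => if nth false [:: b0; b1; b2] c then y c else T c].
  have tA : t \in A by rewrite inA /CTt !ffunE /=.
  have ex3 : forall x0 x1 x2 : bool, x0 || x1 || x2 ->
      exists c : 'I_3, nth false [:: x0; x1; x2] c.
    case; first by exists 0.
    case; first by exists 1.
    by case; first by exists 2.
  have [c hc] := ex3 _ _ _ hb.
  have tc : t c = y c by rewrite ffunE hc.
  have tT : t != T by apply/negP => /eqP e; move: (ny c); rewrite -tc e eqxx.
  by move: (nyu c); rewrite -(key t tA tT) tc eqxx.
have := @octa W Am Bm Cm hA hB hC hAB hBC hCA.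
rewrite (term0 false false true) // (term0 false true false) // (term0 false true true) //.
rewrite (term0 true false false) // (term0 true false true) // (term0 true true false) //.
rewrite (term0 true true true) //.
have -> : tri (Am false) (Bm false) (Cm false) = true by have := TA; rewrite inA.
by [].
Qed.

Definition cz (i k : 'I_3) : int * int :=
  match nat_of_ord i, nat_of_ord k with
  | O, O => (0, 3) | O, S O => (1, - 5) | O, _ => (- 4, 4)
  | S O, O => (1, 2) | S O, S O => (2, 5) | S O, _ => (3, 5)
  | _, O => (2, 2) | _, S O => (- 6, - 2) | _, _ => (5, - 4)
  end.

Definition cz' (o : option lab) : int * int :=
  if o is Some l then cz l.1 l.2 else (0, 0).

Definition dZ (p q : int * int) : int := p.1 * q.2 - p.2 * q.1.
Definition collZ (p q r : int * int) : int :=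
  (q.1 - p.1) * (r.2 - p.2) - (q.2 - p.2) * (r.1 - p.1).
Definition triZ (p q r : int * int) :=
  ((0 < dZ p q) == (0 < dZ q r)) && ((0 < dZ q r) == (0 < dZ r p)).

Definition ex : config R := fun i k =>
  \row_(j < 2) (if (j : nat) == 0%N then (cz i k).1 else (cz i k).2)%:~R.

Lemma ex_x o : all_pts ex o 0 0 = (cz' o).1%:~R.
Proof. by case: o => [l|] /=; rewrite mxE // mulr0z. Qed.

Lemma ex_y o : all_pts ex o 0 1 = (cz' o).2%:~R.
Proof. by case: o => [l|] /=; rewrite mxE // mulr0z. Qed.

Lemma det_exo a b : det2 (all_pts ex a) (all_pts ex b) = (dZ (cz' a) (cz' b))%:~R.
Proof. by rewrite /det2 !ex_x !ex_y -!intrM -intrB. Qed.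

Lemma det_ex c1 k1 c2 k2 :
  det2 (ex c1 k1) (ex c2 k2) = (dZ (cz c1 k1) (cz c2 k2))%:~R.
Proof. exact: (det_exo (Some (c1, k1)) (Some (c2, k2))). Qed.

Lemma tri_ex c1 k1 c2 k2 c3 k3 :
  tri (ex c1 k1) (ex c2 k2) (ex c3 k3) = triZ (cz c1 k1) (cz c2 k2) (cz c3 k3).
Proof. by rewrite /tri !det_ex !ltr0z. Qed.

Lemma coll_ex a b c :
  collinear (all_pts ex a) (all_pts ex b) (all_pts ex c) <->
  (collZ (cz' a) (cz' b) (cz' c) = 0).
Proof.
rewrite /collinear !ex_x !ex_y -!intrB -!intrM -intrB.
split => [/eqP|h]; first by rewrite intr_eq0 => /eqP.
by apply/eqP; rewrite intr_eq0; apply/eqP; exact: h.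
Qed.

Definition ords : seq 'I_3 := [:: 0; 1; 2].
Definition opts : seq (option lab) :=
  None :: [seq Some (i, k) | i <- ords, k <- ords].

Lemma mem_opts a : a \in opts.
Proof.
case: a => [[i k]|]; last by vm_compute.
by case: (ord3 i) => ->; case: (ord3 k) => ->; vm_compute.
Qed.

Lemma D_inj : all (fun a => all (fun b =>
  ((cz' a).1 == (cz' b).1) && ((cz' a).2 == (cz' b).2) ==> (a == b)) opts) opts.
Proof. by vm_compute. Qed.

Lemma D_coll : all (fun a => all (fun b => all (fun c =>
  (a != b) ==> (a != c) ==> (b != c) ==> (collZ (cz' a) (cz' b) (cz' c) != 0))
  opts) opts) opts.
Proof. by vm_compute. Qed.

Lemma gp_ex : general_position ex.
Proof.
split.
  move=> a b e.
  have e1 := congr1 (fun M : point R => M 0 0) e.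
  have e2 := congr1 (fun M : point R => M 0 1) e.
  rewrite /= !ex_x in e1; rewrite /= !ex_y in e2.
  move/intr_inj: e1 => e1; move/intr_inj: e2 => e2.
  apply/eqP; move/allP: D_inj => /(_ a (mem_opts a)) /allP /(_ b (mem_opts b)) /implyP; apply.
  by rewrite e1 e2 !eqxx.
move=> a b c nab nac nbc /coll_ex hc.
move/allP: D_coll => /(_ a (mem_opts a)) /allP /(_ b (mem_opts b)) /allP /(_ c (mem_opts c)).
by rewrite nab nac nbc /= hc eqxx.
Qed.

Lemma tri_in_conv (I : finType) (Y : I -> point R) (u v w : I) :
  det2 (Y u) (Y v) != 0 -> det2 (Y v) (Y w) != 0 -> det2 (Y w) (Y u) != 0 ->
  tri (Y u) (Y v) (Y w) -> in_conv Y 0.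
Proof.
move=> n1 n2 n3 ht.
apply: (@in_conv_comp I 'I_3 (fun c => nth u [:: u; v; w] c) Y).
by apply: tri3_conv.
Qed.

Lemma pc_ex : pair_condition ex.
Proof.
move=> i j nij.
move: nij.
case: (ord3 i) => ->; case: (ord3 j) => -> // _.
- apply: (@tri_in_conv _ _ (true, 0) (true, 1) (true, 2));
    by rewrite ?tri_ex ?det_ex ?intr_eq0; vm_compute.
- apply: (@tri_in_conv _ _ (true, 0) (true, 1) (true, 2));
    by rewrite ?tri_ex ?det_ex ?intr_eq0; vm_compute.
- apply: (@tri_in_conv _ _ (false, 0) (false, 1) (false, 2));
    by rewrite ?tri_ex ?det_ex ?intr_eq0; vm_compute.
- apply: (@tri_in_conv _ _ (true, 0) (false, 1) (false, 2));
    by rewrite ?tri_ex ?det_ex ?intr_eq0; vm_compute.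
- apply: (@tri_in_conv _ _ (false, 0) (false, 1) (false, 2));
    by rewrite ?tri_ex ?det_ex ?intr_eq0; vm_compute.
- apply: (@tri_in_conv _ _ (false, 0) (true, 1) (true, 2));
    by rewrite ?tri_ex ?det_ex ?intr_eq0; vm_compute.
Qed.

Definition mk3 (a b c : 'I_3) : {ffun 'I_3 -> 'I_3} := [ffun z : 'I_3 => nth 0 [:: a; b; c] (z : nat)].

Lemma ffun3_eq (t u : {ffun 'I_3 -> 'I_3}) :
  (t == u) = [&& t 0 == u 0, t 1 == u 1 & t 2 == u 2].
Proof.
apply/eqP/and3P => [-> //|[/eqP h0 /eqP h1 /eqP h2]].
by apply/ffunP => c; case: (ord3 c) => ->.
Qed.

Lemma D_count :
  #|[set t : {ffun 'I_3 -> 'I_3} | triZ (cz 0 (t 0)) (cz 1 (t 1)) (cz 2 (t 2))]| = 3%N.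
Proof.
have -> : [set t : {ffun 'I_3 -> 'I_3} | triZ (cz 0 (t 0)) (cz 1 (t 1)) (cz 2 (t 2))]
    = mk3 1 0 1 |: (mk3 1 1 1 |: [set mk3 1 2 1]).
  apply/setP => t; rewrite !inE !ffun3_eq /mk3 !ffunE.
  move: (t 0) (t 1) (t 2) => a b c.
  by case: (ord3 a) => ->; case: (ord3 b) => ->; case: (ord3 c) => ->; vm_compute.
rewrite !cardsU1 cards1 !inE !ffun3_eq /mk3 !ffunE.
by vm_compute.
Qed.

Lemma num_ex : num_colourful ex = 3%N.
Proof.
rewrite /num_colourful; apply: etrans D_count; apply: eq_card => t; rewrite !inE.
apply/idP/idP => h.
  by move/asboolE/(cc_iff gp_ex): h; rewrite /CTt /CT /P /= tri_ex.
by apply/asboolE/(cc_iff gp_ex); rewrite /CTt /CT /P /= tri_ex.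
Qed.

End Geo.

Theorem mainTheorem3 (R : realFieldType) :
  (forall S : config R,
     general_position S -> pair_condition S -> (3 <= num_colourful S)%N) /\
  (exists S : config R,
     general_position S /\ pair_condition S /\ num_colourful S = 3%N).
Proof.
split.
  by move=> S gp pc; apply: lower.
exists (ex R); split; first exact: gp_ex.
split; first exact: pc_ex.
exact: num_ex.
Qed.
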